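(* Under the Standing Setup and Assumption (G) described in the context, $$\mathcal{E}(PC_{f,\mathcal{T}})\ \ge\ \max_{\alpha\in V_k}\big[\mathcal{E}(f\oplus\varphi_\alpha)\big]^{2^s},$$ where $V_k\subseteq\mathbf{F}_2^n$ is the subspace spanned by the first $k$ standard basis vectors.
   Context: Standing Setup. $f:\mathbf{F}_2^n\to\mathbf{F}_2$ is a Boolean function. $\mathbf{x}_1,\ldots,\mathbf{x}_n$ are binary sequences, $\mathbf{x}_j=(x_j(t))_{t\ge0}$, with $\mathbf{x}_j$ periodic of period $T_j$, i.e. $x_j(t)=x_j(t \bmod T_j)$. Let $s\ge1$ and integers $0=\ell_1<\ell_2<\cdots<\ell_{s+1}=k\le n$; variable $j$ belongs to block $i$ if $\ell_i<j\le\ell_{i+1}$. For $1\le i\le s$, $M_i=q_i\,\mathrm{lcm}(T_{\ell_i+1},\ldots,T_{\ell_{i+1}})$ with $q_i$ a positive integer. For $c=\sum_{i=1}^s c_i2^{i-1}\in\{0,\ldots,2^s-1\}$ with $c_i\in\{0,1\}$, put $\tau_c=\sum_{i=1}^s c_iM_i$, and $\mathcal{T}=\{\tau_c\}$. The parity-check sequence is $PC_{f,\mathcal{T}}(t)=\bigoplus_{c=0}^{2^s-1} f\big(x_1(t+\tau_c),\ldots,x_n(t+\tau_c)\big)$. The bias of a Boolean function $h$ of $m$ variables is $\mathcal{E}(h)=2^{-m}\sum_{x\in\mathbf{F}_2^m}(-1)^{h(x)}$. The bias $\mathcal{E}(PC_{f,\mathcal{T}})$ is the bias of $PC_{f,\mathcal{T}}(t)$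 (for a fixed $t\ge0$) viewed as a Boolean function of the $T_1+\cdots+T_n$ bits $x_j(0),\ldots,x_j(T_j-1)$, $1\le j\le n$; equivalently $\mathbb{E}[(-1)^{PC_{f,\mathcal{T}}(t)}]$ when these bits are independent and uniform. Assumption (G): (i) for every $j$ with $k<j\le n$, the $2^s$ integers $\tau_c$ are pairwise incongruent modulo $T_j$; (ii) for every $i\in\{1,\ldots,s\}$ and every $j$ in block $i$, the $2^{s-1}$ integers $\sum_{l\ne i}c_lM_l$ ($c_l\in\{0,1\}$) are pairwise incongruent modulo $T_j$. For $\alpha\in\mathbf{F}_2^n$, $\varphi_\alpha$ is the linear function $x\mapsto\alpha\cdot x=\bigoplus_{j}\alpha_jx_j$. *)

(* Defs.v *)
From HB Require Import structures.
From mathcomp Require Import all_boot all_order all_algebra.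
Set Implicit Arguments. Unset Strict Implicit. Unset Printing Implicit Defensive.
Import Order.TTheory GRing.Theory Num.Theory.

(* F_2^m is modelled as {ffun 'I_m -> bool}; xor is addb. *)

Definition bias (A : finType) (h : A -> bool) : rat :=
  ((#|A|%:R)^-1 * \sum_(x : A) (-1) ^+ h x)%R.

Definition linphi (n : nat) (alpha x : {ffun 'I_n -> bool}) : bool :=
  \big[addb/false]_(j < n) (alpha j && x j).

(* The independent bits x_j(0),...,x_j(T_j - 1), 0 <= j < n (0-indexed) *)
Definition bitvar (n : nat) (T : 'I_n -> nat) : finType :=
  {j : 'I_n & 'I_(T j)}.

Definition seqval (n : nat) (T : 'I_n -> nat) (Tpos : forall j, 0 < T j)
  (X : {ffun bitvar T -> bool}) (j : 'I_n) (t : nat) : bool :=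
  X (Tagged (fun j => 'I_(T j)) (Ordinal (ltn_pmod t (Tpos j)))).

(* Blocks (0-indexed): variable j (0-indexed) belongs to block i < s iff
   l i <= j < l i.+1   (i.e. l_{i+1} < j+1 <= l_{i+2} in 1-indexed terms). *)
Definition inblock (l : nat -> nat) (i j : nat) : bool := (l i <= j < l i.+1)%N.

Definition Mblk (n : nat) (T : 'I_n -> nat) (l q : nat -> nat) (i : nat) : nat :=
  (q i * \big[lcmn/1%N]_(j : 'I_n | inblock l i j) T j)%N.

Definition tau (n s : nat) (T : 'I_n -> nat) (l q : nat -> nat)
  (c : {ffun 'I_s -> bool}) : nat :=
  (\sum_(i < s) c i * Mblk T l q i)%N.

Definition PC (n s : nat) (T : 'I_n -> nat) (Tpos : forall j, 0 < T j)
  (l q : nat -> nat) (f : {ffun 'I_n -> bool} -> bool) (t : nat)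
  (X : {ffun bitvar T -> bool}) : bool :=
  \big[addb/false]_(c : {ffun 'I_s -> bool})
     f [ffun j => seqval Tpos X j (t + tau T l q c)].

(* Main.v *)
Require Import Defs.
From HB Require Import structures.
From mathcomp Require Import all_boot all_order all_algebra.
Import Order.TTheory GRing.Theory Num.Theory.

Section Gen.
Set Implicit Arguments. Unset Strict Implicit.
Local Open Scope ring_scope.

Definition avg (T : finType) (h : T -> rat) : rat := ((#|T|%:R)^-1 * \sum_(x : T) h x).

Definition mrg (A : finType) (P : pred A) (Y1 Y2 : {ffun A -> bool}) : {ffun A -> bool} :=
  [ffun a => if P a then Y1 a else Y2 a].

Lemma card_ffun_gt0 (A : finType) : (0 < #|{ffun A -> bool}|)%N.
Proof. by apply/card_gt0P; exists [ffun=> false]. Qed.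

Lemma sum_merge (A : finType) (P : pred A) (G : {ffun A -> bool} -> rat) :
  \sum_(Y1 : {ffun A -> bool}) \sum_(Y2 : {ffun A -> bool}) G (mrg P Y1 Y2)
  = #|{ffun A -> bool}|%:R * \sum_Y G Y.
Proof.
rewrite pair_bigA /=.
pose phi (p : {ffun A -> bool} * {ffun A -> bool}) := (mrg P p.1 p.2, mrg P p.2 p.1).
have phiK : involutive phi.
  case=> Y1 Y2; rewrite /phi /=; congr pair; apply/ffunP=> a; rewrite !ffunE; by case: (P a).
rewrite (reindex_inj (inv_inj phiK)) /=.
rewrite (eq_bigr (fun p => G p.1)); last first.
  by case=> Y1 Y2 _; congr G; rewrite /mrg /=; apply/ffunP=> a; rewrite !ffunE; case: (P a).
rewrite -(pair_bigA _ (fun Y1 Y2 => G Y1)) /=.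
under eq_bigr do rewrite sumr_const card_ffun.
by rewrite mulr_sumr; apply: eq_bigr => Y _; rewrite mulr_natl card_ffun.
Qed.

Lemma avg_merge (A : finType) (P : pred A) (G : {ffun A -> bool} -> rat) :
  \sum_Y G Y = (#|{ffun A -> bool}|%:R)^-1 *
  \sum_(Y1 : {ffun A -> bool}) \sum_(Y2 : {ffun A -> bool}) G (mrg P Y1 Y2).
Proof.
rewrite sum_merge mulrA mulVf ?mul1r //.
by rewrite pnatr_eq0 -lt0n card_ffun_gt0.
Qed.

Lemma cs_avg (T : finType) (g chi : T -> rat) : (forall x, chi x ^+ 2 = 1) -> (0 < #|T|)%N ->
  avg (fun x => g x * chi x) ^+ 2 <= avg (fun x => g x ^+ 2).
Proof.
move=> H1 HT.
set a := avg _.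
have N0 : (#|T|%:R : rat) != 0 by rewrite pnatr_eq0 -lt0n.
have Ea : \sum_x g x * chi x = #|T|%:R * a by rewrite /a /avg mulrA mulfV ?mul1r.
have H : 0 <= \sum_x (g x - a * chi x) ^+ 2 := sumr_ge0 _ (fun _ _ => sqr_ge0 _).
have E : \sum_x (g x - a * chi x) ^+ 2 = \sum_x g x ^+ 2 - #|T|%:R * a ^+ 2.
  under eq_bigr do rewrite sqrrB exprMn H1 mulr1.
  rewrite big_split /= sumrB sumr_const sumrMnl.
  have -> : \sum_i g i * (a * chi i) = a * (#|T|%:R * a).
    by rewrite -Ea mulr_sumr; apply: eq_bigr => i _; rewrite mulrCA.
  rewrite -[a ^+ 2 *+ _]mulr_natl.
  by rewrite mulrCA -expr2 mulr2n opprD addrA subrK.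
have : #|T|%:R * a ^+ 2 <= \sum_x g x ^+ 2 by rewrite -subr_ge0 -E.
rewrite /avg -/a => Hle.
by rewrite ler_pdivlMl ?ltr0n.
Qed.

Lemma cs_core (A : finType) (U0 W : pred A) (p : A -> A) (h chi : {ffun A -> bool} -> rat) :
  involutive p ->
  (forall a, W a -> p a = a) ->
  (forall a, W a -> U0 a) ->
  (forall a, U0 a -> U0 (p a) -> W a) ->
  (forall Y Y' : {ffun A -> bool}, (forall a, U0 a -> Y a = Y' a) -> h Y = h Y') ->
  (forall Y Y' : {ffun A -> bool}, (forall a, W a -> Y a = Y' a) -> chi Y = chi Y') ->
  (forall Y, chi Y ^+ 2 = 1) ->
  avg (fun Y => h Y * chi Y) ^+ 2 <= avg (fun Y => h Y * h [ffun a => Y (p a)]).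
Proof.
move=> pK pW WU UW hU chW ch1.
set N := (#|{ffun A -> bool}|%:R : rat).
pose g (Y1 : {ffun A -> bool}) := N^-1 * \sum_Y2 h (mrg W Y1 Y2).
have E1 : avg (fun Y => h Y * chi Y) = avg (fun Y => g Y * chi Y).
  rewrite /avg; congr (_ * _).
  rewrite (avg_merge W) mulr_sumr; apply: eq_bigr => Y1 _.
  rewrite /g -mulrA; congr (_ * _); rewrite mulr_suml; apply: eq_bigr => Y2 _.
  by congr (_ * _); apply: chW => a Wa; rewrite /mrg ffunE Wa.
have E2 : avg (fun Y => h Y * h [ffun a => Y (p a)]) = avg (fun Y => g Y ^+ 2).
  rewrite /avg; congr (_ * _).
  rewrite (avg_merge U0).
  have -> : \sum_Y1 \sum_Y2 h (mrg U0 Y1 Y2) * h [ffun a => mrg U0 Y1 Y2 (p a)]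
          = \sum_Y1 h Y1 * \sum_Y2 h (mrg W Y1 Y2).
    apply: eq_bigr => Y1 _; rewrite mulr_sumr.
    pose sg (Y : {ffun A -> bool}) := [ffun a => Y (p a)].
    have sgK : involutive sg by move=> Y; apply/ffunP=> a; rewrite !ffunE pK.
    rewrite (reindex_inj (inv_inj sgK)) /=.
    apply: eq_bigr => Y2 _; congr (_ * _).
      by apply: hU => a Ua; rewrite /mrg ffunE Ua.
    apply: hU => a Ua; rewrite /mrg !ffunE.
    case Wa: (W a); first by rewrite (pW a Wa) Ua.
    case Upa: (U0 (p a)); last by rewrite pK.
    by rewrite (UW a Ua Upa) in Wa.
  rewrite -/N.
  have -> : N^-1 * \sum_Y1 h Y1 * \sum_Y2 h (mrg W Y1 Y2) = \sum_Y1 h Y1 * g Y1.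
    by rewrite mulr_sumr; apply: eq_bigr => Y1 _; rewrite mulrCA.
  rewrite [LHS](avg_merge W) mulr_sumr; apply: eq_bigr => Y1 _.
  have gm : forall Y2, g (mrg W Y1 Y2) = g Y1.
    move=> Y2; rewrite /g; congr (_ * _); apply: eq_bigr => Y3 _; congr h.
    by apply/ffunP=> a; rewrite /mrg !ffunE; case: (W a).
  under eq_bigr do rewrite gm.
  by rewrite -mulr_suml mulrA expr2.
rewrite E1 E2; apply: cs_avg => //; exact: card_ffun_gt0.
Qed.

Lemma sum1 (T : finType) : \sum_(x : T) (1 : rat) = #|T|%:R.
Proof. by rewrite sumr_const. Qed.

Lemma transfer (A B : finType) (io : B -> A) (G : {ffun B -> bool} -> rat) : injective io ->
  avg (fun Y : {ffun A -> bool} => G [ffun b => Y (io b)]) = avg G.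
Proof.
move=> ioI.
pose res (Y : {ffun A -> bool}) : {ffun B -> bool} := [ffun b => Y (io b)].
pose ext (z : {ffun B -> bool}) : {ffun A -> bool} := [ffun a => [exists b, (io b == a) && z b]].
have exb z b : [exists b0, (io b0 == io b) && z b0] = z b.
  apply/existsP/idP => [[b' /andP[/eqP/ioI -> //]] | zb].
  by exists b; rewrite eqxx.
pose sh (e Y : {ffun A -> bool}) : {ffun A -> bool} := [ffun a => Y a (+) e a].
have shK e : involutive (sh e) by move=> Y; apply/ffunP=> a; rewrite !ffunE -addbA addbb addbF.
pose K z := \sum_(Y : {ffun A -> bool}) ((res Y == z)%:R : rat).
have Kc z : K z = K [ffun=> false].
  rewrite /K (reindex_inj (inv_inj (shK (ext z)))); apply: eq_bigr => Y _.
  suff -> : (res (sh (ext z) Y) == z) = (res Y == [ffun=> false]) by [].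
  apply/idP/idP => /eqP H; apply/eqP; apply/ffunP => b; have := congr1 (fun f : {ffun _ -> bool} => f b) H;
  rewrite !ffunE ?exb; by case: (Y (io b)); case: (z b).
have sumG (H : {ffun B -> bool} -> rat) : \sum_Y H (res Y) = K [ffun=> false] * \sum_z H z.
  transitivity (\sum_Y \sum_z ((res Y == z)%:R * H z)).
    apply: eq_bigr => Y _; rewrite (bigD1 (res Y)) //= eqxx mul1r big1 ?addr0 //.
    by move=> z /negbTE; rewrite eq_sym => ->; rewrite mul0r.
  rewrite exchange_big mulr_sumr; apply: eq_bigr => z _.
  by rewrite -mulr_suml -/(K z) Kc.
have cardA : (#|{ffun A -> bool}|%:R : rat) = K [ffun=> false] * #|{ffun B -> bool}|%:R.
  by rewrite -!sum1 (sumG (fun _ => 1)).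
have K0 : K [ffun=> false] != 0.
  apply/eqP => K0; move: cardA; rewrite K0 mul0r => /eqP; rewrite pnatr_eq0 => /eqP E.
  by move: (card_ffun_gt0 A); rewrite E.
rewrite /avg (sumG G) cardA invfM (mulrC (K _)^-1) -mulrA (mulrA (K _)^-1) mulVf // mul1r.
by [].
Qed.

Lemma eq_avg (T : finType) (h1 h2 : T -> rat) : h1 =1 h2 -> avg h1 = avg h2.
Proof. by move=> E; rewrite /avg; congr (_ * _); apply: eq_bigr => x _. Qed.

Section Frame.
Variables (n s : nat) (R : 'I_s -> 'I_n -> bool).
Local Notation C := {ffun 'I_s -> bool}.
Definition key (m : nat) (j : 'I_n) (c : C) : C := [ffun i => c i && ~~ ((i < m)%N && R i j)].
Definition zv m (Y : {ffun ('I_n * C) -> bool}) (c : C) : {ffun 'I_n -> bool} :=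
  [ffun j => Y (j, key m j c)].
Definition Dm m (c : C) : bool := [forall i : 'I_s, (m <= i)%N ==> ~~ c i].
Definition Phi m (F : {ffun 'I_n -> bool} -> rat) :=
  avg (fun Y : {ffun ('I_n * C) -> bool} => \prod_(c | Dm m c) F (zv m Y c)).
Definition chi1 (i : 'I_s) (al x : {ffun 'I_n -> bool}) : rat :=
  \prod_(j | R i j) (-1) ^+ (al j && x j).
Definition chiacc m al x := \prod_(i : 'I_s | (i < m)%N) chi1 i al x.

Lemma Phi0 F : Phi 0 F = avg F.
Proof.
rewrite /Phi -(transfer F (io := fun j : 'I_n => (j, [ffun=> false] : C))); last first.
  by move=> j j' [].
apply: eq_avg => Y.
rewrite (big_pred1 ([ffun=> false] : C)); last first.
  move=> c; rewrite /= /Dm; apply/forallP/eqP => [H | ->].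
    by apply/ffunP => i; rewrite ffunE; apply/negbTE; exact: (implyP (H i)).
  by move=> i; rewrite ffunE.
congr F; apply/ffunP => j; rewrite !ffunE; congr (Y (_, _)).
by apply/ffunP => i; rewrite !ffunE.
Qed.

Lemma chiacc0 al x : chiacc 0 al x = 1.
Proof. by rewrite /chiacc big1. Qed.

Lemma base_or m al G : (0 <= avg (fun x => G x * chiacc m al x) ^+ (2^m)) \/
  (avg (fun x => G x * chiacc m al x) ^+ (2^m) = Phi m G).
Proof.
case: m => [|m].
  right; rewrite expn0 expr1 Phi0; apply: eq_avg => x; by rewrite chiacc0 mulr1.
by left; rewrite expnS mulnC exprM; apply: sqr_ge0.
Qed.


Lemma step (i0 : 'I_s) F al :
  Phi i0 (fun x => F x * chi1 i0 al x) ^+ 2 <= Phi i0.+1 F.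
Proof.
pose flip (d : C) : C := [ffun i => if i == i0 then ~~ d i else d i].
have flipK : involutive flip.
  by move=> d; apply/ffunP => i; rewrite !ffunE; case: eqP => // _; rewrite negbK.
pose p (a : 'I_n * C) := if R i0 a.1 then a else (a.1, flip a.2).
pose h (Y : {ffun 'I_n * C -> bool}) := \prod_(c | Dm i0 c) F (zv i0 Y c).
pose ch (Y : {ffun 'I_n * C -> bool}) := \prod_(c | Dm i0 c) chi1 i0 al (zv i0 Y c).
have Dc0 c : Dm i0 c -> c i0 = false.
  by move=> /forallP /(_ i0) /implyP /(_ (leqnn _)) /negbTE.
have DmS c : Dm i0.+1 c && ~~ c i0 = Dm i0 c.
  apply/idP/idP.
    case/andP => /forallP H nc; apply/forallP => i; apply/implyP => le.
    have [-> //|ne] := eqVneq i i0.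
    apply: (implyP (H i)); rewrite ltn_neqAle le andbT.
    by move: ne; rewrite eq_sym.
  move=> /forallP H; apply/andP; split.
    by apply/forallP => i; apply/implyP => lt; apply: (implyP (H i)); exact: ltnW.
  exact: (implyP (H i0) (leqnn _)).
have keyS (c : C) j : c i0 = false -> key i0.+1 j c = key i0 j c.
  move=> c0; apply/ffunP => i; rewrite !ffunE.
  have [->|ne] := eqVneq i i0; first by rewrite c0.
  have ne' : (nat_of_ord i == nat_of_ord i0) = false by exact: (negbTE ne).
  by rewrite ltnS leq_eqVlt ne'.
have keyF (c : C) j : c i0 = false ->
    key i0.+1 j (flip c) = if R i0 j then key i0 j c else flip (key i0 j c).
  move=> c0; apply/ffunP => i.
  have [->|ne] := eqVneq i i0.
    by case Rj: (R i0 j); rewrite !ffunE eqxx c0 ?Rj ltnSn ?ltnn.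
  have ne' : (nat_of_ord i == nat_of_ord i0) = false by exact: (negbTE ne).
  by case Rj: (R i0 j); rewrite !ffunE (negbTE ne) ltnS leq_eqVlt ne'.
have E1 : Phi i0 (fun x => F x * chi1 i0 al x) = avg (fun Y => h Y * ch Y).
  by apply: eq_avg => Y; rewrite /h /ch -big_split.
have E2 : Phi i0.+1 F = avg (fun Y => h Y * h [ffun a => Y (p a)]).
  apply: eq_avg => Y; rewrite (bigID (fun c : C => c i0)) /= mulrC; congr (_ * _).
    rewrite /h; under eq_bigl do rewrite DmS.
    by apply: eq_bigr => c Dc; rewrite /zv; congr F; apply/ffunP => j; rewrite !ffunE keyS ?Dc0.
  rewrite (reindex_inj (inv_inj flipK)) /h.
  have Pe (c : C) : Dm i0.+1 (flip c) && flip c i0 = Dm i0 c.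
    rewrite -DmS ffunE eqxx; congr andb; rewrite /Dm; apply: eq_forallb => i.
    rewrite ffunE; case: eqP => // ->; by rewrite ltnn.
  under eq_bigl do rewrite Pe.
  apply: eq_bigr => c Dc; congr F; apply/ffunP => j; rewrite !ffunE keyF ?Dc0 //.
  by rewrite /p /=; case: (R i0 j).
rewrite E1 E2.
apply: (@cs_core _ (fun a : 'I_n * C => R i0 a.1 || ~~ a.2 i0) (fun a : 'I_n * C => R i0 a.1) p h ch).
- case=> j d; rewrite /p /=; case Rj: (R i0 j); rewrite /= ?Rj //= flipK //.
- by case=> j d /= Rj; rewrite /p /= Rj.
- by move=> a /= ->.
- case=> j d /=; rewrite /p /=; case Rj: (R i0 j) => //=; rewrite ffunE eqxx negbK Rj.
  by case: (d i0).
- move=> Y Y' H; apply: eq_bigr => c Dc; congr F; apply/ffunP => j; rewrite !ffunE.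
  by apply: H; rewrite /= ffunE Dc0 // orbT.
- move=> Y Y' H; apply: eq_bigr => c Dc; apply: eq_bigr => j Rj; rewrite !ffunE.
  by rewrite H.
- move=> Y; rewrite /ch -prodrXl big1 // => c _; rewrite /chi1 -prodrXl big1 // => j _.
  exact: sqrr_sign.
Qed.

Lemma mainP al : forall m, (m <= s)%N -> forall F,
  avg (fun x => F x * chiacc m al x) ^+ (2 ^ m) <= Phi m F.
Proof.
elim=> [|m IH] Hm F.
  have -> : avg (fun x => F x * chiacc 0 al x) = avg F.
    by apply: eq_avg => x; rewrite chiacc0 mulr1.
  by rewrite Phi0 expn0 expr1.
pose i0 : 'I_s := Ordinal Hm.
have H1 := step i0 F al.
pose F' := fun x => F x * chi1 i0 al x.
have Hacc : forall x, F x * chiacc m.+1 al x = F' x * chiacc m al x.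
  move=> x; rewrite /F' -mulrA; congr (_ * _).
  rewrite /chiacc (bigD1 i0) //=; congr (_ * _); apply: eq_bigl => i.
  have [-> | ne] := eqVneq i i0; first by rewrite andbF /= ltnn.
  have ne' : (nat_of_ord i == m) = false by exact: (negbTE ne).
  by rewrite andbT ltnS leq_eqVlt ne'.
rewrite (eq_avg Hacc).
have IH' := IH (ltnW Hm) F'.
apply: le_trans H1.
rewrite expnS mulnC exprM.
case: (base_or m al F') => [pos | eq].
  by rewrite !expr2; apply: ler_pM.
by rewrite eq.
Qed.

End Frame.

Lemma lmono (s : nat) (l : nat -> nat) : (forall i, (i < s)%N -> (l i < l i.+1)%N) ->
  forall a b, (a <= b)%N -> (b <= s)%N -> (l a <= l b)%N.
Proof.
move=> hlinc a; elim=> [|b IHb]; first by rewrite leqn0 => /eqP ->.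
move=> hab hbs; rewrite leq_eqVlt in hab; case/orP: hab => [/eqP -> //|hab].
exact: leq_trans (IHb hab (ltnW hbs)) (ltnW (hlinc b hbs)).
Qed.

Lemma blk_uniq (n s : nat) (l : nat -> nat) : (forall i, (i < s)%N -> (l i < l i.+1)%N) ->
  forall (i i' : 'I_s) (j : 'I_n), inblock l i j -> inblock l i' j -> i = i'.
Proof.
move=> hlinc.
have H : forall (i i' : 'I_s) (j : 'I_n), inblock l i j -> inblock l i' j -> (i <= i')%N.
  move=> i i' j /andP[a1 a2] /andP[b1 b2]; rewrite leqNgt; apply/negP => lt.
  have := lmono hlinc lt (ltnW (ltn_ord i)).
  move=> h; have := leq_trans b2 (leq_trans h a1); by rewrite ltnn.
move=> i i' j h1 h2; apply/val_inj/eqP; rewrite eqn_leq; apply/andP; split.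
  exact: H h1 h2.
exact: H h2 h1.
Qed.

Lemma blk_exists (n s : nat) (l : nat -> nat) : l 0%N = 0%N ->
  forall j : 'I_n, (j < l s)%N -> exists i : 'I_s, inblock l i j.
Proof.
move=> hl0.
suff H : forall m, (m <= s)%N -> forall j : nat, (j < l m)%N ->
    exists i : 'I_s, inblock l i j.
  by move=> j; apply: H.
elim=> [|m IHm] Hm j hj; first by rewrite hl0 in hj.
case: (ltnP j (l m)) => hjm; first exact: IHm (ltnW Hm) j hjm.
by exists (Ordinal Hm); rewrite /inblock /= hjm hj.
Qed.

Lemma sign_xor_big (n : nat) (al x : {ffun 'I_n -> bool}) :
  (-1) ^+ linphi al x = \prod_(j < n) ((-1) ^+ (al j && x j) : rat).
Proof.
rewrite /linphi.
elim/big_rec2: _ => // j b r _ <-; exact: signr_addb.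
Qed.

Lemma sign_big (I : finType) (b : I -> bool) :
  (-1) ^+ (\big[addb/false]_(i : I) b i) = \prod_(i : I) ((-1) ^+ b i : rat).
Proof. elim/big_rec2: _ => // j x r _ <-; exact: signr_addb. Qed.

Lemma link_lhs (n s k : nat) (f : {ffun 'I_n -> bool} -> bool) (l : nat -> nat)
  (hl0 : l 0%N = 0%N) (hlinc : forall i, (i < s)%N -> (l i < l i.+1)%N) (hls : l s = k)
  (al : {ffun 'I_n -> bool}) (hal : forall j : 'I_n, (k <= j)%N -> al j = false) :
  bias (fun x : {ffun 'I_n -> bool} => f x (+) linphi al x) =
  avg (fun x => (-1) ^+ f x * chiacc (fun (i : 'I_s) (j : 'I_n) => inblock l i j) s al x).
Proof.
apply: eq_avg => x; rewrite signr_addb sign_xor_big; congr (_ * _).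
rewrite /chiacc /chi1; symmetry.
under eq_bigl do rewrite ltn_ord.
under eq_bigr do rewrite big_mkcond.
rewrite exchange_big /=; symmetry; apply: eq_bigr => j _.
case hv: (al j && x j).
  have jk : (j < k)%N.
    by rewrite ltnNge; apply/negP => /hal hj; rewrite hj in hv.
  rewrite -hls in jk; have [i Rij] := blk_exists hl0 jk.
  rewrite (bigD1 i) //= Rij big1 ?mulr1 // => i' ne.
  case: ifP => // Ri'.
  by rewrite (blk_uniq hlinc Ri' Rij) eqxx in ne.
by rewrite big1 // => i _; case: ifP.
Qed.

Lemma link_rhs (n s k : nat) (f : {ffun 'I_n -> bool} -> bool)
  (T : 'I_n -> nat) (Tpos : forall j, (0 < T j)%N)
  (l q : nat -> nat)
  (hl0 : l 0%N = 0%N)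
  (hlinc : forall i, (i < s)%N -> (l i < l i.+1)%N)
  (hls : l s = k)
  (G1 : forall j : 'I_n, (k <= j)%N ->
          forall c c' : {ffun 'I_s -> bool},
            (tau T l q c = tau T l q c' %[mod T j])%N -> c = c')
  (G2 : forall (i : 'I_s) (j : 'I_n), inblock l i j ->
          forall c c' : {ffun 'I_s -> bool}, c i = false -> c' i = false ->
            (tau T l q c = tau T l q c' %[mod T j])%N -> c = c')
  (t : nat) :
  bias (@PC n s T Tpos l q f t) =
  Phi (fun (i : 'I_s) (j : 'I_n) => inblock l i j) s (fun x => (-1) ^+ f x).
Proof.
pose R := fun (i : 'I_s) (j : 'I_n) => inblock l i j.
pose C := {ffun 'I_s -> bool}.
have keyK j (c : C) : key R s j (key R s j c) == key R s j c.
  by apply/eqP/ffunP => i; rewrite !ffunE -andbA andbb.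
pose B := {a : 'I_n * C | key R s a.1 a.2 == a.2}.
pose bk j (c : C) : B := exist _ (j, key R s j c) (keyK j c).
pose G (Y : {ffun B -> bool}) := \prod_(c : C) ((-1) ^+ f [ffun j => Y (bk j c)] : rat).
have Dms (c : C) : Dm s c = true.
  by apply/forallP => i; apply/implyP; rewrite leqNgt ltn_ord.
have -> : Phi R s (fun x => (-1) ^+ f x) = avg G.
  rewrite /Phi -(transfer G (io := val)); last exact: val_inj.
  apply: eq_avg => Y; under eq_bigl do rewrite Dms.
  by apply: eq_bigr => c _; congr (_ ^+ f _); apply/ffunP => j; rewrite !ffunE.
pose io (b : B) : bitvar T :=
  Tagged (fun j => 'I_(T j)) (Ordinal (ltn_pmod (t + tau T l q (val b).2) (Tpos (val b).1))).
have modK j (c : C) : ((t + tau T l q c) %% T j = (t + tau T l q (key R s j c)) %% T j)%N.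
  case: (pickP (fun i => R i j)) => [i Rij | none]; last first.
    congr (_ %% _)%N; congr (_ + _)%N; congr (tau _ _ _ _).
    by apply/ffunP => i; rewrite !ffunE; move: (none i) => /= ->; rewrite andbF andbT.
  rewrite /tau [in RHS](bigD1 i) //= [in LHS](bigD1 i) //= !ffunE ltn_ord /=.
  move: Rij; rewrite /= => Rij; rewrite Rij.
  rewrite andbF mul0n add0n.
  have -> : (\sum_(i' < s | i' != i) key R s j c i' * Mblk T l q i' =
             \sum_(i' < s | i' != i) c i' * Mblk T l q i')%N.
    apply: eq_bigr => i' ne; rewrite ffunE ltn_ord /=.
    case Ri': (R i' j); last by rewrite andbT.
    by rewrite (blk_uniq hlinc Ri' Rij) eqxx in ne.
  have : (T j %| Mblk T l q i)%N.
    apply: dvdn_mull; apply: (biglcmn_sup j) => //.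
  case/dvdnP => kk ->.
  by rewrite addnCA mulnA modnMDl.
have ioI : injective io.
  move=> [[j1 d1] H1] [[j2 d2] H2] E.
  have Ej : j1 = j2 := congr1 tag E.
  subst j2.
  move/eqP: E; rewrite eq_Tagged /= => /eqP /(congr1 val) /= Em.
  have Hm : (tau T l q d1 = tau T l q d2 %[mod T j1])%N.
    by apply/eqP; rewrite -(eqn_modDl t); apply/eqP.
  have Ed : d1 = d2.
    case: (leqP k j1) => hk; first exact: G1 hk _ _ Hm.
    rewrite -hls in hk; have [i Rij] := blk_exists hl0 hk.
    have z (d : C) : key R s j1 d == d -> d i = false.
      move=> /eqP /ffunP /(_ i); rewrite ffunE ltn_ord /= (_ : R i j1 = true) //.
      by rewrite andbF => <-.
    exact: G2 Rij _ _ (z _ H1) (z _ H2) Hm.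
  subst d2; congr exist; exact: eq_irrelevance.
rewrite /bias -/(avg _) -(transfer G ioI).
apply: eq_avg => X.
rewrite /PC sign_big /G; apply: eq_bigr => c _.
congr (_ ^+ f _); apply/ffunP => j; rewrite !ffunE /seqval /=.
congr (X (Tagged _ _)); apply: val_inj => /=.
exact: modK.
Qed.

End Gen.

Theorem corollary1 (n s k : nat) (f : {ffun 'I_n -> bool} -> bool)
  (T : 'I_n -> nat) (Tpos : forall j, (0 < T j)%N)
  (l q : nat -> nat)
  (hs : (1 <= s)%N)
  (hl0 : l 0%N = 0%N)
  (hlinc : forall i, (i < s)%N -> (l i < l i.+1)%N)
  (hls : l s = k) (hkn : (k <= n)%N)
  (hq : forall i, (i < s)%N -> (0 < q i)%N)
  (G1 : forall j : 'I_n, (k <= j)%N ->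
          forall c c' : {ffun 'I_s -> bool},
            tau T l q c = tau T l q c' %[mod T j] -> c = c')
  (G2 : forall (i : 'I_s) (j : 'I_n), inblock l i j ->
          forall c c' : {ffun 'I_s -> bool}, c i = false -> c' i = false ->
            tau T l q c = tau T l q c' %[mod T j] -> c = c')
  (t : nat) :
  forall alpha : {ffun 'I_n -> bool}, (forall j : 'I_n, (k <= j)%N -> alpha j = false) ->
    (bias (fun x : {ffun 'I_n -> bool} => f x (+) linphi alpha x) ^+ (2 ^ s)
       <= bias (@PC n s T Tpos l q f t))%R.
Proof.
move=> al hal.
rewrite (link_lhs f hl0 hlinc hls hal) (link_rhs f Tpos hl0 hlinc hls G1 G2 t).
exact: (mainP _ al (leqnn s)).
Qed.
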